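(* Let $K\neq0$ and let $(\mathcal M,\rho)$ be a metric space such that $\operatorname{diam}(\mathcal M)\le\pi/(2\sqrt K)$ when $K>0$, satisfying the one-sided four point $\operatorname{cosq}_K$ condition. Let $\mathcal L$ be a shortest joining $A$ to $B$ and let $(\mathcal L_n)_{n\ge1}$ be shortests joining $A_n$ to $B_n$, with $A_n\to A$ and $B_n\to B$. Let $\mathfrak g_r$ be the reduced parametrization of $\mathcal L$ relative to $A$ and $\mathfrak g_{r,n}$ that of $\mathcal L_n$ relative to $A_n$. Then $\mathfrak g_{r,n}\to\mathfrak g_r$ uniformly on $[0,1]$.
   Context: A shortest joining $P$ to $Q$ is a rectifiable curve from $P$ to $Q$ of length $\rho(P,Q)$. If $\mathcal L$ is a shortest of length $l$ from $A$, its reduced parametrization relative to $A$ is $\mathfrak g_r:[0,1]\to\mathcal M$, $\mathfrak g_r(t)=$ the point of $\mathcal L$ such that the arc of $\mathcal L$ from $A$ to it has length $tl$. Let $\kappa=\sqrt{|K|}$. For $A\neq P$, $B\neq Q$ (with $\rho(A,P),\rho(B,Q),\rho(A,B)<\pi/\sqrt K$ if $K>0$) put $x=\rho(A,P)$, $y=\rho(B,Q)$, $a=\rho(A,B)$, $b=\rho(P,Q)$, $d=\rho(P,B)$, $f=\rho(A,Q)$; for $K>0$ $$\operatorname{cosq}_K(\overrightarrow{AP},\overrightarrow{BQ})=\frac{\cos\kappa b+\cos\kappa x\cos\kappa y}{\sin\kappa x\sin\kappa y}-\frac{(\cos\kappa x+\cos\kappa d)(\cos\kappa y+\cos\kappa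 f)}{(1+\cos\kappa a)\sin\kappa x\sin\kappa y},$$ and for $K<0$ $$\operatorname{cosq}_K(\overrightarrow{AP},\overrightarrow{BQ})=\frac{(\cosh\kappa x+\cosh\kappa d)(\cosh\kappa y+\cosh\kappa f)}{(1+\cosh\kappa a)\sinh\kappa x\sinh\kappa y}-\frac{\cosh\kappa b+\cosh\kappa x\cosh\kappa y}{\sinh\kappa x\sinh\kappa y}.$$ Upper/lower four point $\operatorname{cosq}_K$ condition: $\operatorname{cosq}_K\le1$ / $\ge-1$ for all such quadruples; one-sided: at least one of the two holds. *)

(* Defs.v *)
From Stdlib Require Import Reals.
Open Scope R_scope.

Definition is_metric {M : Type} (rho : M -> M -> R) : Prop :=
  (forall x y, 0 <= rho x y) /\
  (forall x y, rho x y = 0 <-> x = y) /\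
  (forall x y, rho x y = rho y x) /\
  (forall x y z, rho x z <= rho x y + rho y z).

Definition conv_to {M : Type} (rho : M -> M -> R) (u : nat -> M) (l : M) : Prop :=
  forall eps, 0 < eps -> exists N, forall n, (N <= n)%nat -> rho (u n) l < eps.

Definition is_curve {M : Type} (rho : M -> M -> R) (g : R -> M) : Prop :=
  forall t, 0 <= t <= 1 -> forall eps, 0 < eps -> exists delta, 0 < delta /\
    forall s, 0 <= s <= 1 -> Rabs (s - t) < delta -> rho (g s) (g t) < eps.

Fixpoint poly_sum {M : Type} (rho : M -> M -> R) (g : R -> M) (p : nat -> R) (n : nat) : R :=
  match n with
  | O => 0
  | S k => poly_sum rho g p k + rho (g (p k)) (g (p (S k)))
  end.

Definition is_partition (a b : R) (p : nat -> R) (n : nat) : Prop :=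
  p O = a /\ p n = b /\ forall i, (i < n)%nat -> p i <= p (S i).

(** [L] is the length of the restriction of [g] to [a,b] (supremum of
    inscribed polygonal lengths); the curve is rectifiable there iff such
    an [L] exists. *)
Definition curve_length {M : Type} (rho : M -> M -> R) (g : R -> M) (a b L : R) : Prop :=
  is_lub (fun S => exists p n, is_partition a b p n /\ S = poly_sum rho g p n) L.

Definition is_shortest {M : Type} (rho : M -> M -> R) (g : R -> M) (P Q : M) : Prop :=
  is_curve rho g /\ g 0 = P /\ g 1 = Q /\ curve_length rho g 0 1 (rho P Q).

Definition is_reduced_param {M : Type} (rho : M -> M -> R) (g gr : R -> M) : Prop :=
  forall t, 0 <= t <= 1 ->
    exists s, 0 <= s <= 1 /\ curve_length rho g 0 s (t * rho (g 0) (g 1)) /\ gr t = g s.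

Definition cosq {M : Type} (rho : M -> M -> R) (K : R) (A P B Q : M) : R :=
  let k := sqrt (Rabs K) in
  let x := rho A P in let y := rho B Q in let a := rho A B in
  let b := rho P Q in let d := rho P B in let f := rho A Q in
  if Rlt_dec 0 K then
    (cos (k*b) + cos (k*x) * cos (k*y)) / (sin (k*x) * sin (k*y))
    - (cos (k*x) + cos (k*d)) * (cos (k*y) + cos (k*f))
      / ((1 + cos (k*a)) * sin (k*x) * sin (k*y))
  else
    (cosh (k*x) + cosh (k*d)) * (cosh (k*y) + cosh (k*f))
      / ((1 + cosh (k*a)) * sinh (k*x) * sinh (k*y))
    - (cosh (k*b) + cosh (k*x) * cosh (k*y)) / (sinh (k*x) * sinh (k*y)).

Definition admissible {M : Type} (rho : M -> M -> R) (K : R) (A P B Q : M) : Prop :=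
  A <> P /\ B <> Q /\
  (0 < K -> rho A P < PI / sqrt K /\ rho B Q < PI / sqrt K /\ rho A B < PI / sqrt K).

Definition upper_cosq {M : Type} (rho : M -> M -> R) (K : R) : Prop :=
  forall A P B Q, admissible rho K A P B Q -> cosq rho K A P B Q <= 1.

Definition lower_cosq {M : Type} (rho : M -> M -> R) (K : R) : Prop :=
  forall A P B Q, admissible rho K A P B Q -> -1 <= cosq rho K A P B Q.

Definition one_sided_cosq {M : Type} (rho : M -> M -> R) (K : R) : Prop :=
  upper_cosq rho K \/ lower_cosq rho K.

(* Main.v *)
Require Import Defs.
From Stdlib Require Import Reals Lra Lia Psatz Classical.
Open Scope R_scope.

Lemma poly_sum_ext {M : Type} (rho : M -> M -> R) (g : R -> M) (p q : nat -> R) (n : nat) :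
  (forall i, (i <= n)%nat -> p i = q i) -> poly_sum rho g p n = poly_sum rho g q n.
Proof.
  induction n as [|n IH]; intros H; simpl; [reflexivity|].
  rewrite IH by (intros; apply H; lia).
  rewrite (H n) by lia. rewrite (H (S n)) by lia. reflexivity.
Qed.

Lemma reduced_dist {M : Type} (rho : M -> M -> R) (g gr : R -> M) (A B : M) :
  is_metric rho -> g 0 = A -> g 1 = B -> curve_length rho g 0 1 (rho A B) ->
  is_reduced_param rho g gr ->
  forall t, 0 <= t <= 1 -> rho A (gr t) = t * rho A B /\ rho (gr t) B = (1 - t) * rho A B.
Proof.
  intros [Hpos [Hsep [Hsym Htri]]] H0 H1 Hlen Hr t Ht.
  destruct (Hr t Ht) as [s [Hs [Hl Heq]]].
  rewrite H0, H1 in Hl. rewrite Heq.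
  set (l := t * rho A B) in *.
  assert (E1 : rho A (g s) <= l).
  { destruct Hl as [Hub _]. apply Hub.
    exists (fun i => match i with O => 0 | _ => s end), 1%nat.
    split; [split; [reflexivity| split; [reflexivity|]]|].
    - intros i Hi. destruct i; [lra| lia].
    - simpl. rewrite H0. ring. }
  assert (E2 : rho (g s) B <= rho A B - l).
  { assert (Hb : is_upper_bound (fun S => exists p n, is_partition 0 s p n /\ S = poly_sum rho g p n) (rho A B - rho (g s) B)).
    { intros S [p [n [[Hp0 [Hpn Hmono]] HS]]]. subst S.
      set (p' := fun i => if (i <=? n)%nat then p i else 1).
      assert (Hp' : forall i, (i <= n)%nat -> p' i = p i).
      { intros i Hi. unfold p'. rewrite (proj2 (Nat.leb_le i n) Hi). reflexivity. }
      destruct Hlen as [Hub _].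
      assert (HH : poly_sum rho g p' (S n) <= rho A B).
      { apply Hub. exists p', (S n). split; [|reflexivity].
        split; [rewrite Hp' by lia; exact Hp0|]. split.
        - unfold p'. replace (S n <=? n)%nat with false; [reflexivity|].
          symmetry. apply Nat.leb_gt. lia.
        - intros i Hi. destruct (Nat.eq_dec i n) as [->|Hne].
          + rewrite Hp' by lia. unfold p'. replace (S n <=? n)%nat with false.
            * lra.
            * symmetry. apply Nat.leb_gt. lia.
          + rewrite !Hp' by lia. apply Hmono. lia. }
      simpl in HH. rewrite (poly_sum_ext rho g p' p n Hp') in HH.
      rewrite (Hp' n (le_n n)) in HH. rewrite Hpn in HH.
      unfold p' in HH. replace (S n <=? n)%nat with false in HH.
      - rewrite H1 in HH. lra.
      - symmetry. apply Nat.leb_gt. lia. }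
    destruct Hl as [_ Hleast]. specialize (Hleast _ Hb). lra. }
  pose proof (Htri A (g s) B). unfold l in *. split; nra.
Qed.

Lemma abs3 (al be ga u v w C m : R) :
  Rabs al <= C -> Rabs be <= C -> Rabs ga <= C ->
  Rabs u <= m -> Rabs v <= m -> Rabs w <= m ->
  Rabs (al * u + be * v + ga * w) <= 3 * (C * m).
Proof.
  intros. 
  assert (Rabs (al*u) <= C*m) by (rewrite Rabs_mult; apply Rmult_le_compat; auto using Rabs_pos).
  assert (Rabs (be*v) <= C*m) by (rewrite Rabs_mult; apply Rmult_le_compat; auto using Rabs_pos).
  assert (Rabs (ga*w) <= C*m) by (rewrite Rabs_mult; apply Rmult_le_compat; auto using Rabs_pos).
  pose proof (Rabs_triang (al*u + be*v) (ga*w)).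
  pose proof (Rabs_triang (al*u) (be*v)). lra.
Qed.

Lemma abs_sum_le (p q H : R) : Rabs p <= H -> Rabs q <= H -> Rabs (p + q) <= 2 * H.
Proof. intros. pose proof (Rabs_triang p q). lra. Qed.

Lemma abs_1p_le (p H : R) : 1 <= H -> Rabs p <= H -> Rabs (1 + p) <= 2 * H.
Proof. intros. pose proof (Rabs_triang 1 p). rewrite Rabs_R1 in H2. lra. Qed.

Lemma U_alg (ha hb hd hf hx hy hxy H m : R) :
  1 <= H -> Rabs ha <= H -> Rabs hd <= H -> Rabs hx <= H -> Rabs hy <= H -> Rabs hxy <= H ->
  Rabs (ha - hx) <= m -> Rabs (hb - hy) <= m -> Rabs (hf - hxy) <= m ->
  Rabs ((hb + hxy) * (1 + ha) - (hx + hd) * (hy + hf) - (1 - hd) * (hy + hxy)) <= 6 * H * m.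
Proof.
  intros.
  replace ((hb + hxy) * (1 + ha) - (hx + hd) * (hy + hf) - (1 - hd) * (hy + hxy))
    with ((1 + ha) * (hb - hy) + (hy + hxy) * (ha - hx) + (- (hx + hd)) * (hf - hxy)) by ring.
  replace (6 * H * m) with (3 * ((2 * H) * m)) by ring.
  apply abs3; auto using abs_1p_le, abs_sum_le.
  rewrite Rabs_Ropp. auto using abs_sum_le.
Qed.

Lemma L_alg (ha hb hd hf hx hy hxy hxmy H m : R) :
  hxmy + hxy = 2 * hx * hy -> hxmy * hxy = hx * hx + hy * hy - 1 ->
  Rabs hb <= H -> Rabs hxmy <= H -> Rabs hd <= H -> Rabs hf <= H -> Rabs hx <= H -> Rabs hy <= H ->
  Rabs (ha - hxy) <= m -> Rabs (hd - hy) <= m -> Rabs (hf - hx) <= m ->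
  Rabs ((hb + hxmy) * (1 + ha) - (hx + hd) * (hy + hf) - (hb - 1) * (1 + hxy)) <= 6 * H * m.
Proof.
  intros E1 E2; intros.
  replace ((hb + hxmy) * (1 + ha) - (hx + hd) * (hy + hf) - (hb - 1) * (1 + hxy))
    with ((hb + hxmy) * (ha - hxy) + (- (hy + hf)) * (hd - hy) + (- (hx + hy)) * (hf - hx)
          + ((hxmy + hxmy * hxy) - (hx + hy) * (hy + hx) + 1 + hxy)) by ring.
  rewrite E2.
  replace (hxmy + (hx * hx + hy * hy - 1) - (hx + hy) * (hy + hx) + 1 + hxy) with
    ((hxmy + hxy) - 2 * hx * hy) by ring.
  rewrite E1. replace (2 * hx * hy - 2 * hx * hy) with 0 by ring. rewrite Rplus_0_r.
  replace (6 * H * m) with (3 * ((2 * H) * m)) by ring.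
  apply abs3; auto using abs_sum_le; rewrite Rabs_Ropp; auto using abs_sum_le.
Qed.

Lemma div_form1 (X Y W s1 s2 : R) : 0 < W -> 0 < s1 -> 0 < s2 ->
  X / (s1 * s2) - Y / (W * s1 * s2) = (X * W - Y) / (W * s1 * s2).
Proof. intros. field. lra. Qed.

Lemma div_form2 (X Y W s1 s2 : R) : 0 < W -> 0 < s1 -> 0 < s2 ->
  Y / (W * s1 * s2) - X / (s1 * s2) = (Y - X * W) / (W * s1 * s2).
Proof. intros. field. lra. Qed.

Lemma div_le1 (Z D : R) : 0 < D -> Z / D <= 1 -> Z <= D.
Proof. intros HD H. assert (Z = Z / D * D) by (field; lra). nra. Qed.

Lemma div_gem1 (Z D : R) : 0 < D -> -1 <= Z / D -> - D <= Z.
Proof. intros HD H. assert (Z = Z / D * D) by (field; lra). nra. Qed.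

Lemma kpos_range (K u : R) : 0 < K -> 0 <= u <= PI / (2 * sqrt K) ->
  0 <= sqrt K * u <= PI / 2.
Proof.
  intros HK [H0 H1]. pose proof (sqrt_lt_R0 K HK).
  split; [nra|].
  replace (PI / 2) with (sqrt K * (PI / (2 * sqrt K))) by (field; lra).
  nra.
Qed.

Lemma kpos_lt (K u : R) : 0 < K -> 0 <= u <= PI / (2 * sqrt K) -> u < PI / sqrt K.
Proof.
  intros HK [H0 H1]. pose proof (sqrt_lt_R0 K HK). pose proof PI_RGT_0.
  assert (PI / (2 * sqrt K) < PI / sqrt K).
  { unfold Rdiv. apply Rmult_lt_compat_l; [lra|]. apply Rinv_lt_contravar; nra. }
  lra.
Qed.

Lemma sin_k_pos (K u : R) : 0 < K -> 0 < u -> u <= PI / (2 * sqrt K) -> 0 < sin (sqrt K * u).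
Proof.
  intros HK H0 H1. pose proof (kpos_range K u HK (conj (Rlt_le _ _ H0) H1)).
  pose proof (sqrt_lt_R0 K HK). pose proof PI_RGT_0.
  apply sin_gt_0; nra.
Qed.

Lemma cos_k_nonneg (K u : R) : 0 < K -> 0 <= u <= PI / (2 * sqrt K) -> 0 <= cos (sqrt K * u).
Proof.
  intros HK H. pose proof (kpos_range K u HK H). pose proof PI_RGT_0.
  apply cos_ge_0; lra.
Qed.

Section S.
End S.

Lemma metric_zero {M : Type} (rho : M -> M -> R) : is_metric rho -> forall x, rho x x = 0.
Proof. intros [_ [H _]] x. apply H. reflexivity. Qed.

Lemma metric_pos_ne {M : Type} (rho : M -> M -> R) : is_metric rho -> forall x y, x <> y -> 0 < rho x y.
Proof. intros [Hp [H _]] x y Hne. destruct (Hp x y) as [h|h]; [exact h|].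
  exfalso. apply Hne. apply H. lra. Qed.

Lemma posK_upper {M : Type} (rho : M -> M -> R) (K : R) :
  is_metric rho -> 0 < K -> (forall x y : M, rho x y <= PI / (2 * sqrt K)) ->
  upper_cosq rho K -> forall A P Q B,
  let h := fun u => cos (sqrt K * u) in
  (h (rho P B) + h (rho A P + rho Q B)) * (1 + h (rho A Q))
  - (h (rho A P) + h (rho P Q)) * (h (rho Q B) + h (rho A B)) <= 0.
Proof.
  intros Hm HK Hd Hup A P Q B h.
  pose proof (metric_zero rho Hm) as Z.
  pose proof Hm as [Hpos [_ [Hsym _]]].
  destruct (classic (A = P)) as [<-|HAP].
  { rewrite Z, Rplus_0_l. unfold h. rewrite Rmult_0_r, cos_0. lra. }
  destruct (classic (Q = B)) as [<-|HQB].
  { rewrite Z, Rplus_0_r. unfold h. rewrite Rmult_0_r, cos_0. lra. }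
  assert (Hd' : forall x y, 0 <= rho x y <= PI / (2 * sqrt K)) by (intros; split; auto).
  assert (Had : admissible rho K A P Q B).
  { split; [exact HAP|]. split; [exact HQB|]. intros _.
    split; [|split]; apply kpos_lt; auto. }
  specialize (Hup A P Q B Had). unfold cosq in Hup.
  destruct (Rlt_dec 0 K) as [_|Hn]; [|lra].
  rewrite (Rabs_pos_eq K) in Hup by lra.

  cbv zeta in Hup.
  assert (sx : 0 < sin (sqrt K * rho A P)) by (apply sin_k_pos; auto using metric_pos_ne).
  assert (sy : 0 < sin (sqrt K * rho Q B)) by (apply sin_k_pos; auto using metric_pos_ne).
  assert (W : 0 < 1 + cos (sqrt K * rho A Q)) by (pose proof (cos_k_nonneg K (rho A Q) HK (Hd' _ _)); lra).
  rewrite div_form1 in Hup by auto.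
  apply div_le1 in Hup; [|apply Rmult_lt_0_compat; [apply Rmult_lt_0_compat|]; auto].
  unfold h; cbv beta. rewrite (Rmult_plus_distr_l (sqrt K) (rho A P)), cos_plus. nra.
Qed.

Lemma posK_lower {M : Type} (rho : M -> M -> R) (K : R) :
  is_metric rho -> 0 < K -> (forall x y : M, rho x y <= PI / (2 * sqrt K)) ->
  lower_cosq rho K -> forall A P B Q,
  let h := fun u => cos (sqrt K * u) in
  0 <= (h (rho P Q) + h (rho A P - rho B Q)) * (1 + h (rho A B))
  - (h (rho A P) + h (rho P B)) * (h (rho B Q) + h (rho A Q)).
Proof.
  intros Hm HK Hd Hlo A P B Q h.
  pose proof (metric_zero rho Hm) as Z.
  destruct (classic (A = P)) as [<-|HAP].
  { rewrite Z, Rminus_0_l. unfold h. rewrite Rmult_0_r, cos_0.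
    rewrite <- Ropp_mult_distr_r, cos_neg. lra. }
  destruct (classic (B = Q)) as [<-|HQB].
  { rewrite Z, Rminus_0_r. unfold h. rewrite Rmult_0_r, cos_0. lra. }
  assert (Hd' : forall x y, 0 <= rho x y <= PI / (2 * sqrt K)) by (intros; split; auto; apply Hm).
  assert (Had : admissible rho K A P B Q).
  { split; [exact HAP|]. split; [exact HQB|]. intros _.
    split; [|split]; apply kpos_lt; auto. }
  specialize (Hlo A P B Q Had). unfold cosq in Hlo.
  destruct (Rlt_dec 0 K) as [_|Hn]; [|lra].
  rewrite (Rabs_pos_eq K) in Hlo by lra.
  cbv zeta in Hlo.
  assert (sx : 0 < sin (sqrt K * rho A P)) by (apply sin_k_pos; auto using metric_pos_ne).
  assert (sy : 0 < sin (sqrt K * rho B Q)) by (apply sin_k_pos; auto using metric_pos_ne).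
  assert (W : 0 < 1 + cos (sqrt K * rho A B)) by (pose proof (cos_k_nonneg K (rho A B) HK (Hd' _ _)); lra).
  rewrite div_form1 in Hlo by auto.
  apply div_gem1 in Hlo; [|apply Rmult_lt_0_compat; [apply Rmult_lt_0_compat|]; auto].
  unfold h; cbv beta. rewrite (Rmult_minus_distr_l (sqrt K) (rho A P)), cos_minus. nra.
Qed.

Lemma cosh_plus' (u v : R) : cosh (u + v) = cosh u * cosh v + sinh u * sinh v.
Proof. unfold cosh, sinh. rewrite Ropp_plus_distr, !exp_plus. field. Qed.

Lemma cosh_minus' (u v : R) : cosh (u - v) = cosh u * cosh v - sinh u * sinh v.
Proof. unfold cosh, sinh, Rminus. rewrite Ropp_plus_distr, Ropp_involutive, !exp_plus. field. Qed.

Lemma cosh_neg' (u : R) : cosh (- u) = cosh u.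
Proof. unfold cosh. rewrite Ropp_involutive. field. Qed.

Lemma sinh_pos' (u : R) : 0 < u -> 0 < sinh u.
Proof. intros. unfold sinh. assert (exp (- u) < exp u) by (apply exp_increasing; lra). lra. Qed.

Lemma cosh_ge1 (u : R) : 1 <= cosh u.
Proof.
  unfold cosh. pose proof (exp_ineq1_le u). pose proof (exp_ineq1_le (- u)). lra.
Qed.

Lemma negK_sqrt_pos (K : R) : K <> 0 -> 0 < sqrt (Rabs K).
Proof. intros. apply sqrt_lt_R0. apply Rabs_pos_lt. exact H. Qed.

Lemma negK_upper {M : Type} (rho : M -> M -> R) (K : R) :
  is_metric rho -> K < 0 ->
  upper_cosq rho K -> forall A P Q B,
  let h := fun u => cosh (sqrt (Rabs K) * u) in
  0 <= (h (rho P B) + h (rho A P + rho Q B)) * (1 + h (rho A Q))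
  - (h (rho A P) + h (rho P Q)) * (h (rho Q B) + h (rho A B)).
Proof.
  intros Hm HK Hup A P Q B h.
  pose proof (metric_zero rho Hm) as Z.
  destruct (classic (A = P)) as [<-|HAP].
  { rewrite Z, Rplus_0_l. unfold h. rewrite Rmult_0_r, cosh_0. lra. }
  destruct (classic (Q = B)) as [<-|HQB].
  { rewrite Z, Rplus_0_r. unfold h. rewrite Rmult_0_r, cosh_0. lra. }
  assert (Had : admissible rho K A P Q B).
  { split; [exact HAP|]. split; [exact HQB|]. intros; lra. }
  specialize (Hup A P Q B Had). unfold cosq in Hup.
  destruct (Rlt_dec 0 K) as [Hn|_]; [lra|].
  cbv zeta in Hup.
  pose proof (negK_sqrt_pos K ltac:(lra)) as kp.
  assert (sx : 0 < sinh (sqrt (Rabs K) * rho A P)) by (apply sinh_pos', Rmult_lt_0_compat; auto using metric_pos_ne).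
  assert (sy : 0 < sinh (sqrt (Rabs K) * rho Q B)) by (apply sinh_pos', Rmult_lt_0_compat; auto using metric_pos_ne).
  assert (W : 0 < 1 + cosh (sqrt (Rabs K) * rho A Q)) by (pose proof (cosh_ge1 (sqrt (Rabs K) * rho A Q)); lra).
  rewrite div_form2 in Hup by auto.
  apply div_le1 in Hup; [|apply Rmult_lt_0_compat; [apply Rmult_lt_0_compat|]; auto].
  unfold h; cbv beta. rewrite (Rmult_plus_distr_l (sqrt (Rabs K)) (rho A P)), cosh_plus'. nra.
Qed.

Lemma negK_lower {M : Type} (rho : M -> M -> R) (K : R) :
  is_metric rho -> K < 0 ->
  lower_cosq rho K -> forall A P B Q,
  let h := fun u => cosh (sqrt (Rabs K) * u) in
  (h (rho P Q) + h (rho A P - rho B Q)) * (1 + h (rho A B))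
  - (h (rho A P) + h (rho P B)) * (h (rho B Q) + h (rho A Q)) <= 0.
Proof.
  intros Hm HK Hlo A P B Q h.
  pose proof (metric_zero rho Hm) as Z.
  destruct (classic (A = P)) as [<-|HAP].
  { rewrite Z, Rminus_0_l. unfold h. rewrite Rmult_0_r, cosh_0.
    rewrite <- Ropp_mult_distr_r, cosh_neg'. lra. }
  destruct (classic (B = Q)) as [<-|HQB].
  { rewrite Z, Rminus_0_r. unfold h. rewrite Rmult_0_r, cosh_0. lra. }
  assert (Had : admissible rho K A P B Q).
  { split; [exact HAP|]. split; [exact HQB|]. intros; lra. }
  specialize (Hlo A P B Q Had). unfold cosq in Hlo.
  destruct (Rlt_dec 0 K) as [Hn|_]; [lra|].
  cbv zeta in Hlo.
  pose proof (negK_sqrt_pos K ltac:(lra)) as kp.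
  assert (sx : 0 < sinh (sqrt (Rabs K) * rho A P)) by (apply sinh_pos', Rmult_lt_0_compat; auto using metric_pos_ne).
  assert (sy : 0 < sinh (sqrt (Rabs K) * rho B Q)) by (apply sinh_pos', Rmult_lt_0_compat; auto using metric_pos_ne).
  assert (W : 0 < 1 + cosh (sqrt (Rabs K) * rho A B)) by (pose proof (cosh_ge1 (sqrt (Rabs K) * rho A B)); lra).
  rewrite div_form2 in Hlo by auto.
  apply div_gem1 in Hlo; [|apply Rmult_lt_0_compat; [apply Rmult_lt_0_compat|]; auto].
  unfold h; cbv beta. rewrite (Rmult_minus_distr_l (sqrt (Rabs K)) (rho A P)), cosh_minus'. nra.
Qed.

Lemma abs_sin_le_pos (z : R) : 0 < z -> Rabs (sin z) <= Rabs z.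
Proof.
  intros H. pose proof (sin_lt_x z H). pose proof (SIN_bound z).
  rewrite (Rabs_pos_eq z) by lra.
  destruct (Rlt_dec z 1).
  - assert (0 < sin z) by (apply sin_pos_tech; lra). rewrite Rabs_pos_eq; lra.
  - unfold Rabs; destruct (Rcase_abs (sin z)); lra.
Qed.

Lemma abs_sin_le (z : R) : Rabs (sin z) <= Rabs z.
Proof.
  destruct (Rtotal_order z 0) as [H|[H|H]].
  - pose proof (abs_sin_le_pos (- z) ltac:(lra)). rewrite sin_neg, !Rabs_Ropp in H0. exact H0.
  - subst. rewrite sin_0. lra.
  - apply abs_sin_le_pos; exact H.
Qed.

Lemma cos_lip (u v : R) : Rabs (cos u - cos v) <= Rabs (u - v).
Proof.
  rewrite form2. rewrite !Rabs_mult.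
  pose proof (abs_sin_le ((u - v) / 2)).
  pose proof (SIN_bound ((u + v) / 2)).
  assert (Rabs (sin ((u + v) / 2)) <= 1) by (unfold Rabs; destruct Rcase_abs; lra).
  replace (Rabs (-2)) with 2 by (unfold Rabs; destruct Rcase_abs; lra).
  replace (Rabs ((u - v) / 2)) with (Rabs (u - v) / 2) in H.
  2:{ unfold Rdiv. rewrite Rabs_mult. rewrite (Rabs_pos_eq (/2)) by lra. reflexivity. }
  pose proof (Rabs_pos (sin ((u - v) / 2))). pose proof (Rabs_pos (sin ((u + v) / 2))).
  nra.
Qed.

Lemma cos_k_lip (k u v : R) : 0 <= k -> Rabs (cos (k * u) - cos (k * v)) <= k * Rabs (u - v).
Proof.
  intros. eapply Rle_trans; [apply cos_lip|].
  replace (k * u - k * v) with (k * (u - v)) by ring. rewrite Rabs_mult, Rabs_pos_eq by lra. lra.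
Qed.

Lemma abs_cos_le1 (u : R) : Rabs (cos u) <= 1.
Proof. pose proof (COS_bound u). unfold Rabs; destruct Rcase_abs; lra. Qed.

Lemma cos_le_mono (u v : R) : 0 <= u -> u <= v -> v <= PI -> cos v <= cos u.
Proof.
  intros. destruct (Req_dec u v) as [->|Hne]; [lra|].
  left. apply cos_decreasing_1; lra.
Qed.

Lemma cos_id_sum (u v : R) : cos (u - v) + cos (u + v) = 2 * cos u * cos v.
Proof. rewrite cos_minus, cos_plus. ring. Qed.

Lemma cos_id_prod (u v : R) : cos (u - v) * cos (u + v) = cos u * cos u + cos v * cos v - 1.
Proof.
  rewrite cos_minus, cos_plus.
  pose proof (sin2 u). pose proof (sin2 v). unfold Rsqr in *.
  replace ((cos u * cos v + sin u * sin v) * (cos u * cos v - sin u * sin v))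
    with (cos u * cos u * (cos v * cos v) - (sin u * sin u) * (sin v * sin v)) by ring.
  rewrite H, H0. ring.
Qed.

Lemma cosh_id_sum (u v : R) : cosh (u - v) + cosh (u + v) = 2 * cosh u * cosh v.
Proof. rewrite cosh_minus', cosh_plus'. ring. Qed.

Lemma cosh_sinh2 (u : R) : sinh u * sinh u = cosh u * cosh u - 1.
Proof.
  unfold cosh, sinh. assert (exp u * exp (- u) = 1).
  { rewrite <- exp_plus. replace (u + - u) with 0 by ring. apply exp_0. }
  nra.
Qed.

Lemma cosh_id_prod (u v : R) : cosh (u - v) * cosh (u + v) = cosh u * cosh u + cosh v * cosh v - 1.
Proof.
  rewrite cosh_minus', cosh_plus'.
  replace ((cosh u * cosh v - sinh u * sinh v) * (cosh u * cosh v + sinh u * sinh v))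
    with (cosh u * cosh u * (cosh v * cosh v) - (sinh u * sinh u) * (sinh v * sinh v)) by ring.
  rewrite !cosh_sinh2. ring.
Qed.

Lemma exp_diff_le (u v : R) : v <= u -> 0 <= exp u - exp v <= exp u * (u - v).
Proof.
  intros. split.
  - destruct (Req_dec u v) as [->|]; [lra|]. left. apply Rlt_Rminus, exp_increasing. lra.
  - pose proof (exp_ineq1_le (v - u)).
    assert (exp v = exp u * exp (v - u)) by (rewrite <- exp_plus; f_equal; ring).
    pose proof (exp_pos u). nra.
Qed.

Lemma cosh_mono_diff (u v : R) : 0 <= v <= u -> 0 <= cosh u - cosh v <= exp u * (u - v).
Proof.
  intros [H0 H1]. unfold cosh.
  pose proof (exp_diff_le u v H1).
  pose proof (exp_diff_le (- v) (- u) ltac:(lra)).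
  assert (exp (- v) <= 1).
  { rewrite <- exp_0. destruct (Req_dec v 0) as [->|]; [rewrite Ropp_0; lra|].
    left. apply exp_increasing. lra. }
  assert (1 <= exp u) by (pose proof (exp_ineq1_le u); lra).
  split.
  -
    pose proof (exp_ineq1_le (u - v)).
    assert (exp u = exp v * exp (u - v)) by (rewrite <- exp_plus; f_equal; ring).
    assert (1 <= exp v) by (pose proof (exp_ineq1_le v); lra).
    assert (exp (- v) = exp (-u) * exp (u - v)) by (rewrite <- exp_plus; f_equal; ring).
    pose proof (exp_pos (- u)). pose proof (exp_pos v). nra.
  - pose proof (exp_pos (- v)). nra.
Qed.

Lemma cosh_lip (R0 u v : R) : 0 <= u <= R0 -> 0 <= v <= R0 ->
  Rabs (cosh u - cosh v) <= exp R0 * Rabs (u - v).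
Proof.
  intros Hu Hv.
  assert (Hm : exp u <= exp R0 /\ exp v <= exp R0).
  { split; (destruct (Req_dec R0 u) as [<-|]; [lra|]) || idtac;
    try (destruct (Req_dec R0 v) as [<-|]; [lra|]);
    left; apply exp_increasing; lra. }
  destruct (Rle_dec v u).
  - pose proof (cosh_mono_diff u v ltac:(lra)).
    rewrite !Rabs_pos_eq by lra. nra.
  - pose proof (cosh_mono_diff v u ltac:(lra)).
    rewrite Rabs_minus_sym, (Rabs_minus_sym u v). rewrite !Rabs_pos_eq by lra. nra.
Qed.

Lemma cosh_le_exp (u R0 : R) : Rabs u <= R0 -> cosh u <= exp R0.
Proof.
  intros H. unfold cosh.
  assert (exp u <= exp R0 /\ exp (- u) <= exp R0).
  { unfold Rabs in H. destruct (Rcase_abs u);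
    split; (destruct (Req_dec u R0) as [->|]; [lra|]) || idtac;
    try (destruct (Req_dec (- u) R0) as [->|]; [lra|]);
    try (left; apply exp_increasing; lra); try lra. }
  lra.
Qed.

Lemma abs_le_inv (z c : R) : Rabs z <= c -> - c <= z <= c.
Proof. unfold Rabs; destruct Rcase_abs; intros; lra. Qed.

Lemma devs {M : Type} (rho : M -> M -> R) (A B An Bn P Q : M) (t : R) :
  is_metric rho -> 0 <= t <= 1 ->
  rho A P = t * rho A B -> rho P B = (1 - t) * rho A B ->
  rho An Q = t * rho An Bn -> rho Q Bn = (1 - t) * rho An Bn ->
  let e := rho A An + rho B Bn in
  Rabs (rho A Q - t * rho A B) <= 2 * e /\
  Rabs (rho P Bn - (1 - t) * rho An Bn) <= 2 * e /\
  Rabs (rho A Bn - (t * rho A B + (1 - t) * rho An Bn)) <= 2 * e /\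
  Rabs (rho A B - rho An Bn) <= e.
Proof.
  intros [Hp [_ [Hs Ht]]] Ht01 H1 H2 H3 H4 e. unfold e; clear e.
  pose proof (Ht A An Bn). pose proof (Ht An Bn B). pose proof (Ht An A B). pose proof (Ht A B Bn).
  pose proof (Ht A An Q). pose proof (Ht An A Q). pose proof (Ht P B Bn). pose proof (Ht P Bn B).
  pose proof (Ht A Bn B). pose proof (Ht An B Bn). pose proof (Ht Q An A).
  rewrite (Hs An A) in *. rewrite (Hs Bn B) in *.
  pose proof (Hp A An). pose proof (Hp B Bn).
  assert (HL : Rabs (rho A B - rho An Bn) <= rho A An + rho B Bn). { apply Rabs_le. split. all: lra. }
  apply abs_le_inv in HL.
  assert (T1 : - (rho A An + rho B Bn) <= t * (rho A B - rho An Bn) <= rho A An + rho B Bn) by nra.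
  assert (T2 : - (rho A An + rho B Bn) <= (1 - t) * (rho A B - rho An Bn) <= rho A An + rho B Bn) by nra.
  repeat split; try apply Rabs_le; try split; try nra.
Qed.

Lemma le_div_r (a b c : R) : 0 < c -> a * c <= b -> a <= b / c.
Proof. intros Hc H. assert (b / c * c = b) by (field; lra). nra. Qed.

Lemma posK_bound {M : Type} (rho : M -> M -> R) (K : R) :
  is_metric rho -> 0 < K -> (forall x y : M, rho x y <= PI / (2 * sqrt K)) ->
  one_sided_cosq rho K ->
  forall (A B An Bn P Q : M) (t : R), 0 <= t <= 1 ->
  rho A P = t * rho A B -> rho P B = (1 - t) * rho A B ->
  rho An Q = t * rho An Bn -> rho Q Bn = (1 - t) * rho An Bn ->
  1 - cos (sqrt K * rho P Q) <= 12 * sqrt K / cos (PI / 4) * (rho A An + rho B Bn).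
Proof.
  intros Hm HK Hd Hc A B An Bn P Q t Ht H1 H2 H3 H4.
  pose proof (devs rho A B An Bn P Q t Hm Ht H1 H2 H3 H4) as Dv. cbv zeta in Dv.
  destruct Dv as [D1 [D2 [D3 D4]]].
  pose proof Hm as [Hp [_ [Hs _]]].
  set (e := rho A An + rho B Bn) in *.
  assert (He : 0 <= e) by (unfold e; pose proof (Hp A An); pose proof (Hp B Bn); lra).
  set (k := sqrt K) in *.
  assert (kp : 0 < k) by (apply sqrt_lt_R0; exact HK).
  assert (Hd' : forall x y, 0 <= rho x y <= PI / (2 * k)) by (intros; split; auto).
  assert (w0 : 0 < cos (PI / 4)) by (pose proof PI_RGT_0; apply cos_gt_0; lra).
  assert (w1 : cos (PI / 4) <= 1) by (pose proof (COS_bound (PI/4)); lra).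
  assert (hd1 : cos (k * rho P Q) <= 1) by (pose proof (COS_bound (k * rho P Q)); lra).
  assert (Lip : forall u v, Rabs (u - v) <= 2 * e -> Rabs (cos (k * u) - cos (k * v)) <= k * (2 * e)).
  { intros u v Huv. eapply Rle_trans; [apply cos_k_lip; lra|]. nra. }
  set (L := rho A B) in *. set (Ln := rho An Bn) in *.
  assert (HL := Hd' A B). assert (HLn := Hd' An Bn). fold L in HL. fold Ln in HLn.
  assert (Hxy : 0 <= t * L + (1 - t) * Ln <= PI / (2 * k)) by (split; nra).
  assert (Hxy0 : 0 <= cos (k * (t * L + (1 - t) * Ln))) by (apply cos_k_nonneg; auto).
  assert (Hrg : forall u, 0 <= u <= PI / (2 * k) -> 0 <= k * u <= PI / 2) by (intros; apply kpos_range; auto).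
  assert (PIp := PI_RGT_0).
  destruct Hc as [Hup|Hlo].
  - destruct (Rle_dec (1/2) t) as [Ht2|Ht2].
    + pose proof (posK_upper rho K Hm HK Hd Hup A P Q Bn) as F. cbv beta zeta in F. fold k in F.
      pose proof (U_alg (cos (k * rho A Q)) (cos (k * rho P Bn)) (cos (k * rho P Q)) (cos (k * rho A Bn))
        (cos (k * rho A P)) (cos (k * rho Q Bn)) (cos (k * (rho A P + rho Q Bn))) 1 (k * (2 * e))
        ltac:(lra) (abs_cos_le1 _) (abs_cos_le1 _) (abs_cos_le1 _) (abs_cos_le1 _) (abs_cos_le1 _)) as U.
      rewrite H1, H4 in U, F.
      specialize (U (Lip _ _ D1) (Lip _ _ D2) (Lip _ _ D3)).
      apply abs_le_inv in U.
      assert (Hy : cos (PI / 4) <= cos (k * ((1 - t) * Ln))).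
      { apply cos_le_mono; [ | | lra]; pose proof (Hrg Ln HLn); nra. }
      replace (12 * k / cos (PI / 4) * e) with (12 * k * e / cos (PI / 4)) by (field; lra).
      apply le_div_r; [exact w0|]. nra.
    + pose proof (posK_upper rho K Hm HK Hd Hup Bn Q P A) as F. cbv beta zeta in F. fold k in F.
      rewrite (Hs Q A), (Hs Bn P), (Hs Bn Q), (Hs Q P), (Hs P A), (Hs Bn A) in F.
      pose proof (U_alg (cos (k * rho P Bn)) (cos (k * rho A Q)) (cos (k * rho P Q)) (cos (k * rho A Bn))
        (cos (k * rho Q Bn)) (cos (k * rho A P)) (cos (k * (rho Q Bn + rho A P))) 1 (k * (2 * e))
        ltac:(lra) (abs_cos_le1 _) (abs_cos_le1 _) (abs_cos_le1 _) (abs_cos_le1 _) (abs_cos_le1 _)) as U.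
      rewrite H1, H4 in U, F.
      rewrite (Rplus_comm ((1 - t) * Ln)) in U, F.
      specialize (U (Lip _ _ D2) (Lip _ _ D1) (Lip _ _ D3)).
      apply abs_le_inv in U.
      assert (Hy : cos (PI / 4) <= cos (k * (t * L))).
      { apply cos_le_mono; [ | | lra]; pose proof (Hrg L HL); nra. }
      replace (12 * k / cos (PI / 4) * e) with (12 * k * e / cos (PI / 4)) by (field; lra).
      apply le_div_r; [exact w0|]. nra.
  - pose proof (posK_lower rho K Hm HK Hd Hlo A P Bn Q) as G. cbv beta zeta in G. fold k in G.
    rewrite (Hs Bn Q) in G.
    assert (I1 : cos (k * (rho A P - rho Q Bn)) + cos (k * (rho A P + rho Q Bn)) = 2 * cos (k * rho A P) * cos (k * rho Q Bn)).
    { rewrite Rmult_minus_distr_l, Rmult_plus_distr_l. apply cos_id_sum. }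
    assert (I2 : cos (k * (rho A P - rho Q Bn)) * cos (k * (rho A P + rho Q Bn)) = cos (k * rho A P) * cos (k * rho A P) + cos (k * rho Q Bn) * cos (k * rho Q Bn) - 1).
    { rewrite Rmult_minus_distr_l, Rmult_plus_distr_l. apply cos_id_prod. }
    pose proof (L_alg (cos (k * rho A Bn)) (cos (k * rho P Q)) (cos (k * rho P Bn)) (cos (k * rho A Q))
        (cos (k * rho A P)) (cos (k * rho Q Bn)) (cos (k * (rho A P + rho Q Bn))) (cos (k * (rho A P - rho Q Bn))) 1 (k * (2 * e))
        I1 I2 (abs_cos_le1 _) (abs_cos_le1 _) (abs_cos_le1 _) (abs_cos_le1 _) (abs_cos_le1 _) (abs_cos_le1 _)) as U.
    rewrite H1, H4 in U, G.
    specialize (U (Lip _ _ D3) (Lip _ _ D2) (Lip _ _ D1)).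
    apply abs_le_inv in U.
    replace (12 * k / cos (PI / 4) * e) with (12 * k * e / cos (PI / 4)) by (field; lra).
      apply le_div_r; [exact w0|]. nra.
Qed.

Lemma negK_bound {M : Type} (rho : M -> M -> R) (K : R) :
  is_metric rho -> K < 0 -> one_sided_cosq rho K ->
  forall (A B An Bn P Q : M) (t : R), 0 <= t <= 1 ->
  rho A P = t * rho A B -> rho P B = (1 - t) * rho A B ->
  rho An Q = t * rho An Bn -> rho Q Bn = (1 - t) * rho An Bn ->
  rho A An + rho B Bn <= 1 ->
  cosh (sqrt (Rabs K) * rho P Q) - 1 <=
    12 * exp (sqrt (Rabs K) * (2 * rho A B + 4)) * (sqrt (Rabs K) * exp (sqrt (Rabs K) * (2 * rho A B + 4)))
      * (rho A An + rho B Bn).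
Proof.
  intros Hm HK Hc A B An Bn P Q t Ht H1 H2 H3 H4 He1.
  pose proof (devs rho A B An Bn P Q t Hm Ht H1 H2 H3 H4) as Dv. cbv zeta in Dv.
  destruct Dv as [D1 [D2 [D3 D4]]].
  pose proof Hm as [Hp [_ [Hs Htr]]].
  pose proof (Hp A An) as pA. pose proof (Hp B Bn) as pB.
  set (e := rho A An + rho B Bn) in *.
  set (k := sqrt (Rabs K)) in *.
  assert (kp : 0 < k) by (apply negK_sqrt_pos; lra).
  set (L := rho A B) in *. set (Ln := rho An Bn) in *.
  set (R0 := 2 * L + 4).
  set (H := exp (k * R0)).
  assert (HL : 0 <= L) by apply Hp. assert (HLn : 0 <= Ln) by apply Hp.
  apply abs_le_inv in D1. apply abs_le_inv in D2. apply abs_le_inv in D3. apply abs_le_inv in D4.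
  assert (Lip : forall u v, 0 <= u <= R0 -> 0 <= v <= R0 -> Rabs (u - v) <= 2 * e ->
     Rabs (cosh (k * u) - cosh (k * v)) <= (k * H) * (2 * e)).
  { intros u v Hu Hv Huv. eapply Rle_trans; [apply cosh_lip with (R0 := k * R0); nra|].
    replace (k * u - k * v) with (k * (u - v)) by ring. rewrite Rabs_mult, (Rabs_pos_eq k) by lra.
    unfold H. pose proof (exp_pos (k * R0)). assert (k * Rabs (u - v) <= k * (2 * e)) by nra.
    replace (k * exp (k * R0) * (2 * e)) with (exp (k * R0) * (k * (2 * e))) by ring.
    apply Rmult_le_compat_l; lra. }
  assert (Bd : forall u, Rabs u <= R0 -> Rabs (cosh (k * u)) <= H).
  { intros u Hu. rewrite Rabs_pos_eq by (pose proof (cosh_ge1 (k * u)); lra).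
    apply cosh_le_exp. rewrite Rabs_mult, (Rabs_pos_eq k) by lra. nra. }
  assert (Bd' : forall u, 0 <= u <= R0 -> Rabs (cosh (k * u)) <= H).
  { intros u Hu. apply Bd. rewrite Rabs_pos_eq; lra. }
  assert (H1le : 1 <= H) by (unfold H; pose proof (exp_ineq1_le (k * R0)); assert (0 <= k * R0) by (unfold R0; nra); lra).
  assert (r1 : 0 <= t * L <= R0) by (unfold R0; nra).
  assert (r2 : 0 <= (1 - t) * Ln <= R0) by (unfold R0; nra).
  assert (r3 : 0 <= t * L + (1 - t) * Ln <= R0) by (unfold R0; nra).
  assert (r4 : 0 <= rho A Q <= R0) by (split; [apply Hp|]; unfold R0; nra).
  assert (r5 : 0 <= rho P Bn <= R0) by (split; [apply Hp|]; unfold R0; nra).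
  assert (r6 : 0 <= rho A Bn <= R0) by (split; [apply Hp|]; unfold R0; nra).
  assert (r7 : 0 <= rho P Q <= R0).
  { split; [apply Hp|]. pose proof (Htr P A Q). rewrite (Hs P A), H1 in H0. unfold R0; nra. }
  assert (r8 : Rabs (t * L - (1 - t) * Ln) <= R0) by (apply Rabs_le; unfold R0; split; nra).
  assert (c1 : forall u, 1 <= cosh u) by apply cosh_ge1.
  destruct Hc as [Hup|Hlo].
  - pose proof (negK_upper rho K Hm HK Hup A P Q Bn) as F. cbv beta zeta in F. fold k in F.
    rewrite H1, H4 in F.
    pose proof (U_alg (cosh (k * rho A Q)) (cosh (k * rho P Bn)) (cosh (k * rho P Q)) (cosh (k * rho A Bn))
        (cosh (k * (t * L))) (cosh (k * ((1 - t) * Ln))) (cosh (k * (t * L + (1 - t) * Ln))) H (k * H * (2 * e))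
        H1le (Bd' _ r4) (Bd' _ r7) (Bd' _ r1) (Bd' _ r2) (Bd' _ r3)) as U.
    assert (L1 : Rabs (rho A Q - t * L) <= 2 * e) by (apply Rabs_le; lra).
    assert (L2 : Rabs (rho P Bn - (1 - t) * Ln) <= 2 * e) by (apply Rabs_le; lra).
    assert (L3 : Rabs (rho A Bn - (t * L + (1 - t) * Ln)) <= 2 * e) by (apply Rabs_le; lra).
    specialize (U (Lip _ _ r4 r1 L1) (Lip _ _ r5 r2 L2) (Lip _ _ r6 r3 L3)).
    apply abs_le_inv in U.
    pose proof (c1 (k * rho P Q)). pose proof (c1 (k * ((1 - t) * Ln))). pose proof (c1 (k * (t * L + (1 - t) * Ln))).
    assert (0 <= H * (k * H * (2 * e))) by (pose proof (exp_pos (k * R0)); unfold H in *; nra).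
    nra.
  - pose proof (negK_lower rho K Hm HK Hlo A P Bn Q) as G. cbv beta zeta in G. fold k in G.
    rewrite (Hs Bn Q) in G. rewrite H1, H4 in G.
    assert (I1 : cosh (k * (t * L - (1 - t) * Ln)) + cosh (k * (t * L + (1 - t) * Ln)) = 2 * cosh (k * (t * L)) * cosh (k * ((1 - t) * Ln))).
    { rewrite Rmult_minus_distr_l, Rmult_plus_distr_l. apply cosh_id_sum. }
    assert (I2 : cosh (k * (t * L - (1 - t) * Ln)) * cosh (k * (t * L + (1 - t) * Ln)) = cosh (k * (t * L)) * cosh (k * (t * L)) + cosh (k * ((1 - t) * Ln)) * cosh (k * ((1 - t) * Ln)) - 1).
    { rewrite Rmult_minus_distr_l, Rmult_plus_distr_l. apply cosh_id_prod. }
    pose proof (L_alg (cosh (k * rho A Bn)) (cosh (k * rho P Q)) (cosh (k * rho P Bn)) (cosh (k * rho A Q))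
        (cosh (k * (t * L))) (cosh (k * ((1 - t) * Ln))) (cosh (k * (t * L + (1 - t) * Ln))) (cosh (k * (t * L - (1 - t) * Ln))) H (k * H * (2 * e))
        I1 I2 (Bd' _ r7) (Bd _ r8) (Bd' _ r5) (Bd' _ r4) (Bd' _ r1) (Bd' _ r2)) as U.
    assert (L1 : Rabs (rho A Q - t * L) <= 2 * e) by (apply Rabs_le; lra).
    assert (L2 : Rabs (rho P Bn - (1 - t) * Ln) <= 2 * e) by (apply Rabs_le; lra).
    assert (L3 : Rabs (rho A Bn - (t * L + (1 - t) * Ln)) <= 2 * e) by (apply Rabs_le; lra).
    specialize (U (Lip _ _ r6 r3 L3) (Lip _ _ r5 r2 L2) (Lip _ _ r4 r1 L1)).
    apply abs_le_inv in U.
    pose proof (c1 (k * rho P Q)). pose proof (c1 (k * (t * L + (1 - t) * Ln))).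
    assert (0 <= H * (k * H * (2 * e))) by (pose proof (exp_pos (k * R0)); unfold H in *; nra).
    nra.
Qed.

Lemma conv_e {M : Type} (rho : M -> M -> R) (A B : M) (An Bn : nat -> M) :
  is_metric rho -> conv_to rho An A -> conv_to rho Bn B ->
  forall xi, 0 < xi -> exists N, forall n, (N <= n)%nat -> rho A (An n) + rho B (Bn n) < xi.
Proof.
  intros [_ [_ [Hs _]]] HA HB xi Hxi.
  destruct (HA (xi / 2) ltac:(lra)) as [N1 H1].
  destruct (HB (xi / 2) ltac:(lra)) as [N2 H2].
  exists (N1 + N2)%nat. intros n Hn.
  specialize (H1 n ltac:(lia)). specialize (H2 n ltac:(lia)).
  rewrite (Hs A), (Hs B). lra.
Qed.

Lemma cosh_gt1 (u : R) : 0 < u -> 1 < cosh u.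
Proof.
  intros. unfold cosh. pose proof (exp_ineq1 u ltac:(lra)). pose proof (exp_ineq1_le (- u)). lra.
Qed.

Theorem lemma6p1 (M : Type) (rho : M -> M -> R) (K : R)
  (Hmet : is_metric rho) (HK : K <> 0)
  (Hdiam : 0 < K -> forall x y : M, rho x y <= PI / (2 * sqrt K))
  (Hcosq : one_sided_cosq rho K)
  (A B : M) (An Bn : nat -> M) (g gr : R -> M) (gn grn : nat -> R -> M)
  (Hg : is_shortest rho g A B)
  (Hgn : forall n, is_shortest rho (gn n) (An n) (Bn n))
  (HA : conv_to rho An A) (HB : conv_to rho Bn B)
  (Hgr : is_reduced_param rho g gr)
  (Hgrn : forall n, is_reduced_param rho (gn n) (grn n)) :
  forall eps, 0 < eps -> exists N, forall n, (N <= n)%nat ->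
    forall t, 0 <= t <= 1 -> rho (grn n t) (gr t) < eps.
Proof.
  intros eps Heps.
  destruct Hg as [_ [Hg0 [Hg1 Hgl]]].
  pose proof (reduced_dist rho g gr A B Hmet Hg0 Hg1 Hgl Hgr) as PD.
  assert (QD : forall n t, 0 <= t <= 1 -> rho (An n) (grn n t) = t * rho (An n) (Bn n) /\
                 rho (grn n t) (Bn n) = (1 - t) * rho (An n) (Bn n)).
  { intros n. destruct (Hgn n) as [_ [H0 [H1 Hl]]].
    exact (reduced_dist rho (gn n) (grn n) (An n) (Bn n) Hmet H0 H1 Hl (Hgrn n)). }
  pose proof Hmet as [Hp [_ [Hs _]]].
  destruct (Rtotal_order K 0) as [Kn|[K0|Kp]]; [| contradiction |].
  -
    set (k := sqrt (Rabs K)).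
    assert (kp : 0 < k) by (apply negK_sqrt_pos; lra).
    set (H := exp (k * (2 * rho A B + 4))).
    set (C := 12 * H * (k * H)).
    assert (Hpos : 0 < H) by apply exp_pos.
    assert (Cp : 0 < C) by (unfold C; repeat apply Rmult_lt_0_compat; lra).
    set (eta := cosh (k * eps) - 1).
    assert (etap : 0 < eta) by (unfold eta; pose proof (cosh_gt1 (k * eps) ltac:(nra)); lra).
    destruct (conv_e rho A B An Bn Hmet HA HB (Rmin 1 (eta / C))) as [N HN].
    { apply Rmin_glb_lt; [lra|]. apply Rdiv_lt_0_compat; lra. }
    exists N. intros n Hn t Ht.
    specialize (HN n Hn).
    pose proof (Rmin_l 1 (eta / C)). pose proof (Rmin_r 1 (eta / C)).
    destruct (PD t Ht) as [P1 P2]. destruct (QD n t Ht) as [Q1 Q2].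
    pose proof (negK_bound rho K Hmet Kn Hcosq A B (An n) (Bn n) (gr t) (grn n t) t Ht P1 P2 Q1 Q2 ltac:(lra)) as Bd.
    fold k H C in Bd.
    assert (Ce : C * (rho A (An n) + rho B (Bn n)) < eta).
    { assert (rho A (An n) + rho B (Bn n) < eta / C) by lra.
      apply (Rmult_lt_compat_l C) in H2; [|lra]. replace (C * (eta / C)) with eta in H2 by (field; lra). lra. }
    rewrite Hs.
    destruct (Rlt_dec (rho (gr t) (grn n t)) eps) as [ok|nok]; [exact ok|].
    exfalso.
    pose proof (cosh_mono_diff (k * rho (gr t) (grn n t)) (k * eps) ltac:(split; nra)).
    unfold eta in Ce. lra.
  -
    specialize (Hdiam Kp).
    set (k := sqrt K).
    assert (kp : 0 < k) by (apply sqrt_lt_R0; exact Kp).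
    assert (w0 : 0 < cos (PI / 4)) by (pose proof PI_RGT_0; apply cos_gt_0; lra).
    set (C := 12 * k / cos (PI / 4)).
    assert (Cp : 0 < C) by (unfold C; apply Rdiv_lt_0_compat; lra).
    set (ep := Rmin eps (PI / (2 * k))).
    assert (PIp := PI_RGT_0).
    assert (epp : 0 < ep) by (apply Rmin_glb_lt; [lra| apply Rdiv_lt_0_compat; lra]).
    assert (ep2 : k * ep <= PI / 2).
    { pose proof (Rmin_r eps (PI / (2 * k))). fold ep in H.
      replace (PI / 2) with (k * (PI / (2 * k))) by (field; lra). nra. }
    set (eta := 1 - cos (k * ep)).
    assert (etap : 0 < eta).
    { unfold eta. pose proof (cos_decreasing_1 0 (k * ep) ltac:(lra) ltac:(lra) ltac:(nra) ltac:(lra) ltac:(nra)).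
      rewrite cos_0 in H. lra. }
    destruct (conv_e rho A B An Bn Hmet HA HB (eta / C)) as [N HN].
    { apply Rdiv_lt_0_compat; lra. }
    exists N. intros n Hn t Ht.
    specialize (HN n Hn).
    destruct (PD t Ht) as [P1 P2]. destruct (QD n t Ht) as [Q1 Q2].
    pose proof (posK_bound rho K Hmet Kp Hdiam Hcosq A B (An n) (Bn n) (gr t) (grn n t) t Ht P1 P2 Q1 Q2) as Bd.
    fold k C in Bd.
    assert (Ce : C * (rho A (An n) + rho B (Bn n)) < eta).
    { apply (Rmult_lt_compat_l C) in HN; [|lra]. replace (C * (eta / C)) with eta in HN by (field; lra). lra. }
    rewrite Hs.
    assert (Hr : 0 <= rho (gr t) (grn n t) <= PI / (2 * k)) by (split; [apply Hp| apply Hdiam]).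
    destruct (Rlt_dec (rho (gr t) (grn n t)) ep) as [ok|nok].
    + pose proof (Rmin_l eps (PI / (2 * k))). fold ep in H. lra.
    + exfalso.
      assert (k * rho (gr t) (grn n t) <= PI / 2).
      { replace (PI / 2) with (k * (PI / (2 * k))) by (field; lra). nra. }
      pose proof (cos_le_mono (k * ep) (k * rho (gr t) (grn n t)) ltac:(nra) ltac:(nra) ltac:(lra)).
      unfold eta in Ce. lra.
Qed.
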